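(* Let $G=(V,E)$ be an infinite graph satisfying the $CD\psi(n,-K)$ condition for some $n>0$, $K>0$, with $D_\mu<\infty$ and $D_w<\infty$, where $\psi:(0,+\infty)\to\mathbb R$ is a $C^1$ concave function with $\psi>0$ and $\psi'>0$ (and $\psi(1)D_w$ in the image of $\psi$). Let $u$ be a positive solution of the heat equation $\partial_t u=\Delta u$ on $V$. Then for all vertices and all $t>0$, $$\Gamma^{\psi}(u)-\psi'(1)\frac{\partial_{t}u}{u}\leq \frac{n}{2t}+\sqrt{nKC},\qquad C=D_{\mu}\left[\psi'(1)\left(\psi^{-1}(\psi(1)D_{w})-1\right)+\psi(1)\right].$$
   Context: Graphs: $G=(V,E)$ is a connected, locally finite graph; each edge $xy$ carries a weight $w_{xy}>0$ (possibly asymmetric), and $\mu:V\to(0,\infty)$ is a vertex measure; $y\sim x$ means $xy\in E$, $\deg(x)=\sum_{y\sim x}w_{xy}<\infty$, $D_\mu=\sup_{x}\deg(x)/\mu(x)$, $D_w=\sup_{x\sim y}\deg(x)/w_{xy}$. Laplacian: $\Delta f(x)=\frac{1}{\mu(x)}\sum_{y\sim x}w_{xy}(f(y)-f(x))$. For $\psi:(0,\infty)\to\mathbb R$ and $f:V\to(0,\infty)$: $\Delta^\psi f(x)=\Delta\big[\psi\big(\tfrac{f}{f(x)}\big)\big](x)$; for $C^1$ $\psi$, $\overline\psi(s)=\psi'(1)(s-1)-(\psi(s)-\psi(1))$ and $\Gamma^\psi f=\Delta^{\overline\psi}f$; $(\Omega^\psi f)(x)=\Delta\big[\psi'\big(\tfrac{f}{f(x)}\big)\tfrac{f}{f(x)}\big(\tfrac{\Delta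 f}{f}-\tfrac{\Delta f(x)}{f(x)}\big)\big](x)$; $2\Gamma_2^\psi(f)=\Omega^\psi f+\frac{\Delta f\,\Delta^\psi f}{f}-\frac{\Delta(f\Delta^\psi f)}{f}$. The graph satisfies $CD\psi(n,K)$ if for every $f:V\to(0,\infty)$ and every vertex, $\Gamma_2^\psi(f)\ge\frac1n(\Delta^\psi f)^2+K\Gamma^\psi(f)$. $\psi^{-1}$ is the inverse function of $\psi$. A positive solution of the heat equation on $U\subset V$ is $u:V\times[0,\infty)\to(0,\infty)$, continuously differentiable in $t$, with $\partial_t u=\Delta u$ at every $x\in U$, $t\ge0$; operators are applied to $u(\cdot,t)$ at each fixed time. *)

(* Defs.v *)
From Stdlib Require Import Reals List Relations.
From Coquelicot Require Import Coquelicot.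
Open Scope R_scope.

Set Implicit Arguments.
Section Graph.
Variable V : Type.
(* nbrs x : duplicate-free finite list of the neighbours y ~ x (local finiteness) *)
Variable nbrs : V -> list V.
Variable w : V -> V -> R.      (* edge weights w_xy, possibly asymmetric *)
Variable mu : V -> R.

Definition adj (x y : V) : Prop := In y (nbrs x).

Definition sumL (l : list V) (g : V -> R) : R :=
  fold_right (fun y acc => g y + acc) 0 l.

Definition weighted_graph : Prop :=
  (forall x, NoDup (nbrs x)) /\
  (forall x y, adj x y <-> adj y x) /\
  (forall x, ~ adj x x) /\
  (forall x y, adj x y -> 0 < w x y) /\
  (forall x, 0 < mu x) /\
  (forall x y, clos_refl_trans V adj x y).

Definition infinite_graph : Prop := ~ exists l : list V, forall v : V, In v l.

Definition deg (x : V) : R := sumL (nbrs x) (fun y => w x y).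

Definition is_Dmu (D : R) : Prop :=
  is_lub (fun r => exists x, r = deg x / mu x) D.
Definition is_Dw (D : R) : Prop :=
  is_lub (fun r => exists x y, adj x y /\ r = deg x / w x y) D.

Definition Lap (f : V -> R) (x : V) : R :=
  / mu x * sumL (nbrs x) (fun y => w x y * (f y - f x)).

Definition DeltaPsi (psi : R -> R) (f : V -> R) (x : V) : R :=
  Lap (fun y => psi (f y / f x)) x.

Definition psibar (psi dpsi : R -> R) (s : R) : R :=
  dpsi 1 * (s - 1) - (psi s - psi 1).

Definition GammaPsi (psi dpsi : R -> R) (f : V -> R) (x : V) : R :=
  DeltaPsi (psibar psi dpsi) f x.

Definition OmegaPsi (dpsi : R -> R) (f : V -> R) (x : V) : R :=
  Lap (fun y => dpsi (f y / f x) * (f y / f x) * (Lap f y / f y - Lap f x / f x)) x.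

(* Gamma_2^psi, from 2 Gamma_2 = Omega + Df D^psi f / f - D(f D^psi f)/f *)
Definition Gamma2Psi (psi dpsi : R -> R) (f : V -> R) (x : V) : R :=
  / 2 * (OmegaPsi dpsi f x + Lap f x * DeltaPsi psi f x / f x
         - Lap (fun y => f y * DeltaPsi psi f y) x / f x).

Definition CDpsi (psi dpsi : R -> R) (n K : R) : Prop :=
  forall f : V -> R, (forall y, 0 < f y) ->
  forall x, Gamma2Psi psi dpsi f x >= / n * (DeltaPsi psi f x) ^ 2 + K * GammaPsi psi dpsi f x.

Definition heat_solution (u : V -> R -> R) : Prop :=
  (forall x t, 0 <= t -> 0 < u x t) /\
  (forall x t, 0 < t -> is_derive (u x) t (Lap (fun y => u y t) x)) /\
  (forall x, filterlim (fun h => (u x h - u x 0) / h) (at_right 0)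
                       (locally (Lap (fun y => u y 0) x))).
End Graph.

Definition good_psi (psi dpsi : R -> R) : Prop :=
  (forall s, 0 < s -> is_derive psi s (dpsi s)) /\
  (forall s, 0 < s -> continuous dpsi s) /\
  (forall a b l, 0 < a -> 0 < b -> 0 <= l <= 1 ->
       l * psi a + (1 - l) * psi b <= psi (l * a + (1 - l) * b)) /\
  (forall s, 0 < s -> 0 < psi s) /\
  (forall s, 0 < s -> 0 < dpsi s).

(* Main.v *)
Require Import Defs.
From Stdlib Require Import Reals List Relations Lra Classical.
From Coquelicot Require Import Coquelicot.
Open Scope R_scope.


Lemma deriv_cont (g : R -> R) c l : is_derive g c l -> continuity_pt g c.
Proof.
  intro H. apply continuity_pt_filterlim.
  apply (ex_derive_continuous g c). exists l; exact H.
Qed.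

Lemma crossing (g dg : R -> R) a b : a < b ->
  (forall t, a <= t <= b -> is_derive g t (dg t)) -> g a <= 0 -> 0 < g b ->
  exists xi, a < xi < b /\ 0 < g xi /\ 0 < dg xi.
Proof.
  intros Hab Hd Ha Hb.
  set (E := fun t => a <= t <= b /\ g t <= 0).
  assert (HE : bound E) by (exists b; intros t [Ht _]; lra).
  assert (HE2 : exists t, E t) by (exists a; split; [lra|exact Ha]).
  destruct (completeness E HE HE2) as [c [Hub Hlub]].
  assert (Hac : a <= c) by (apply Hub; split; [lra|exact Ha]).
  assert (Hcb : c <= b) by (apply Hlub; intros t [Ht _]; lra).
  assert (Hgc : g c <= 0).
  { destruct (Rle_or_lt (g c) 0) as [h|h]; [exact h|exfalso].
    assert (Hc := deriv_cont g c (dg c) (Hd c (conj Hac Hcb))).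
    unfold continuity_pt, continue_in, limit1_in, limit_in in Hc.
    destruct (Hc (g c) h) as [alp [Halp Hx]].
    assert (Hup : is_upper_bound E (c - alp/2)).
    { intros t [Ht Hgt]. destruct (Rle_or_lt t (c - alp/2)) as [h1|h1]; [exact h1|].
      assert (t <= c) by (apply Hub; split; assumption).
      destruct (Req_dec t c) as [->|hne]; [lra|].
      assert (hne' : c <> t) by (intro; apply hne; symmetry; assumption).
      assert (Hd1 : R_dist t c < alp) by (unfold R_dist; apply Rabs_def1; lra).
      assert (HH := Hx t (conj (conj I hne') Hd1)).
      simpl in HH; unfold R_dist in HH. apply Rabs_def2 in HH. lra. }
    specialize (Hlub _ Hup). lra. }
  assert (Hcb' : c < b) by (destruct Hcb as [h|h]; [exact h| subst; lra]).
  assert (Hpos : forall t, c < t <= b -> 0 < g t).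
  { intros t Ht. destruct (Rle_or_lt (g t) 0) as [h|h]; [|exact h].
    assert (t <= c) by (apply Hub; split; [lra|exact h]). lra. }
  destruct (MVT_cor2 g dg c b Hcb') as [xi [Heq Hxi]].
  { intros t Ht. apply is_derive_Reals. apply Hd. lra. }
  exists xi. split; [lra|]. split; [apply Hpos; lra|].
  assert (0 < g b - g c) by lra.
  rewrite Heq in H. 
  destruct (Rle_or_lt (dg xi) 0) as [h|h]; [|exact h].
  assert (dg xi * (b - c) <= 0) by (apply Rmult_le_0_r; lra). lra.
Qed.

Lemma D_minus (f g : R -> R) (x a b : R) : is_derive f x a -> is_derive g x b -> is_derive (fun t => f t - g t) x (a - b).
Proof. intros; now apply (is_derive_minus f g). Qed.
Lemma D_plus (f g : R -> R) (x a b : R) : is_derive f x a -> is_derive g x b -> is_derive (fun t => f t + g t) x (a + b).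
Proof. intros; now apply (is_derive_plus f g). Qed.
Lemma D_const (k x : R) : is_derive (fun _ => k) x 0.
Proof. apply (is_derive_const (V:=R_NormedModule) k x). Qed.
Lemma D_id (x : R) : is_derive (fun t => t) x 1.
Proof. apply (is_derive_id (K:=R_AbsRing) x). Qed.
Lemma D_val (f : R -> R) (x a b : R) : is_derive f x a -> a = b -> is_derive f x b.
Proof. intros H ->; exact H. Qed.
Lemma D_comp (f g : R -> R) (x a b : R) : is_derive f (g x) a -> is_derive g x b -> is_derive (fun t => f (g t)) x (b * a).
Proof. intros; now apply (is_derive_comp f g). Qed.


Section Comparison.
Variable V : Type.
Variables phi dphi : V -> R -> R.
Variables n c B A L P : R.
Hypothesis Hn : 0 < n.
Hypothesis Hc : 0 < c.
Hypothesis HcB : B < 2 * c ^ 2 / n.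
Hypothesis HA : 0 <= A.
Hypothesis HL : 0 <= L.
Hypothesis Hd : forall z t, 0 < t -> is_derive (phi z) t (dphi z t).
Hypothesis HP : forall z t, 0 < t -> phi z t <= P.
Hypothesis HC : forall z t, 0 < t -> 0 < phi z t -> dphi z t <= L.
Hypothesis HD : forall z t M, 0 < t -> 0 < phi z t -> (forall y, phi y t <= M) ->
  dphi z t <= A * (M - phi z t) - 2 / n * (phi z t) ^ 2 + B.

Lemma upper_growth z a s : 0 < a <= s -> phi z s <= Rmax (phi z a) 0 + L * (s - a).
Proof.
  intros [Ha Has]. destruct Has as [Has|<-]; [| pose proof (Rmax_l (phi z a) 0); lra].
  destruct (Rle_or_lt (phi z s) (Rmax (phi z a) 0 + L * (s - a))) as [h|h]; [exact h|exfalso].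
  destruct (crossing (fun t => phi z t - Rmax (phi z a) 0 - L * (t - a))
                     (fun t => dphi z t - L) a s Has) as [xi [Hxi [H1 H2]]].
  - intros t Ht. 
    apply (is_derive_ext (fun t => phi z t - (Rmax (phi z a) 0 + L * (t - a)))).
    { intro x0; change (phi z x0 - (Rmax (phi z a) 0 + L * (x0 - a)) = phi z x0 - Rmax (phi z a) 0 - L * (x0 - a)); ring. }
    apply (D_val _ _ (dphi z t - (0 + L * (1 - 0)))); [|ring].
    apply D_minus; [apply Hd; lra|].
    apply D_plus; [apply D_const|].
    apply is_derive_scal. apply D_minus; [apply D_id|apply D_const].
  - pose proof (Rmax_l (phi z a) 0). lra.
  - lra.
  - pose proof (Rmax_r (phi z a) 0).
    assert (0 < phi z xi) by (assert (0 <= L * (xi - a)) by (apply Rmult_le_pos; lra); lra).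
    specialize (HC z xi ltac:(lra) H0). lra.
Qed.

Definition mm (t : R) := n / (2 * t) + c.

Lemma mm_derive t : 0 < t -> is_derive mm t (- n / (2 * t ^ 2)).
Proof.
  intro Ht. unfold mm. auto_derive.
  - lra.
  - field. lra.
Qed.

Definition good (tau : R) := forall y s, 0 < s <= tau -> phi y s <= mm s.

Theorem comparison z T : 0 < T -> phi z T <= mm T.
Proof.
  intros HT.
  destruct (Rle_or_lt (phi z T) (mm T)) as [h|hbad]; [exact h|exfalso].
  set (P' := Rmax P 0).
  assert (HP' : P <= P' /\ 0 <= P') by (split; [apply Rmax_l|apply Rmax_r]).
  set (t0 := Rmin T (n / (2 * (P' + 1)))).
  assert (Ht0 : 0 < t0).
  { unfold t0. apply Rmin_glb_lt; [lra|]. apply Rdiv_lt_0_compat; lra. }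
  assert (Ht0T : t0 <= T) by apply Rmin_l.
  assert (Hgood0 : good t0).
  { intros y s [Hs Hst]. pose proof (HP y s Hs).
    assert (Hst2 : s <= n / (2 * (P' + 1))) by (pose proof (Rmin_r T (n / (2 * (P' + 1)))); fold t0 in H0; lra).
    unfold mm.
    assert (P' + 1 <= n / (2 * s)).
    { apply (Rmult_le_reg_r (2 * s)); [lra|].
      unfold Rdiv. rewrite Rmult_assoc, Rinv_l by lra. rewrite Rmult_1_r.
      apply (Rmult_le_compat_r (2 * (P' + 1))) in Hst2; [|lra].
      unfold Rdiv in Hst2. rewrite Rmult_assoc, Rinv_l in Hst2 by lra. lra. }
    lra. }
  set (E := fun tau => 0 < tau <= T /\ good tau).
  assert (HEb : bound E) by (exists T; intros t [Ht _]; lra).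
  assert (HEn : exists t, E t) by (exists t0; split; [lra|exact Hgood0]).
  destruct (completeness E HEb HEn) as [ts [Hub Hlub]].
  assert (Hts0 : t0 <= ts) by (apply Hub; split; [lra|exact Hgood0]).
  assert (HtsT : ts <= T) by (apply Hlub; intros t [Ht _]; lra).
  set (delta := 2 * c ^ 2 / n - B).
  assert (Hdelta : 0 < delta) by (unfold delta; lra).
  set (Q := A * (4 * n / ts ^ 2 + 2 * L)).
  assert (HQ : 0 <= Q).
  { unfold Q. apply Rmult_le_pos; [exact HA|].
    assert (0 < 4 * n / ts ^ 2) by (apply Rdiv_lt_0_compat; [lra|apply pow_lt; lra]). lra. }
  set (h := Rmin (ts / 2) (delta / (2 * (Q + 1)))).
  assert (Hh : 0 < h).
  { unfold h. apply Rmin_glb_lt; [lra|]. apply Rdiv_lt_0_compat; lra. }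
  assert (Hh1 : h <= ts / 2) by apply Rmin_l.
  assert (HQh : Q * h < delta).
  { assert (h <= delta / (2 * (Q + 1))) by apply Rmin_r.
    apply Rle_lt_trans with (Q * (delta / (2 * (Q + 1)))).
    - apply Rmult_le_compat_l; lra.
    - assert (Q * (delta / (2 * (Q + 1))) = delta * (Q / (2 * (Q + 1)))) by (field; lra).
      rewrite H0.
      assert (Q / (2 * (Q + 1)) < 1).
      { apply (Rmult_lt_reg_r (2 * (Q + 1))); [lra|].
        unfold Rdiv. rewrite Rmult_assoc, Rinv_l by lra. lra. }
      assert (delta * (Q / (2 * (Q + 1))) < delta * 1) by (apply Rmult_lt_compat_l; lra).
      lra. }
  set (a := ts - h).
  assert (Ha_def : a = ts - h) by reflexivity.
  assert (Ha : ts / 2 <= a) by (unfold a; lra).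
  assert (Hga : good a).
  { destruct (classic (exists t', E t' /\ a < t')) as [[t' [[_ Hg] Ht']]|hn].
    - intros y s [Hs Hsa]. apply Hg. lra.
    - exfalso.
      assert (is_upper_bound E a).
      { intros t Et. destruct (Rle_or_lt t a) as [h1|h1]; [exact h1|].
        exfalso; apply hn; exists t; split; assumption. }
      specialize (Hlub a H). unfold a in Hlub. lra. }
  set (b := Rmin (ts + h) T).
  assert (Hb : ts <= b <= ts + h) by (unfold b; split; [apply Rmin_glb; lra|apply Rmin_l]).
  assert (HbT : b <= T) by apply Rmin_r.
  assert (Hngb : ~ good b).
  { intro Hg. destruct (Rle_or_lt b ts) as [h1|h1].
    - assert (b = T).
      { destruct (Rle_or_lt (ts + h) T) as [h2|h2].
        - exfalso. assert (b = ts + h) by (unfold b; apply Rmin_left; exact h2). lra.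
        - unfold b; apply Rmin_right; lra. }
      apply (Rlt_not_le _ _ hbad). apply Hg. lra.
    - assert (b <= ts) by (apply Hub; split; [split; lra|exact Hg]). lra. }
  destruct (not_all_ex_not _ _ Hngb) as [y Hy].
  destruct (not_all_ex_not _ _ Hy) as [s Hs].
  apply imply_to_and in Hs. destruct Hs as [[Hs0 Hsb] Hsy]. apply Rnot_le_lt in Hsy.
  assert (Has : a < s).
  { destruct (Rle_or_lt s a) as [h1|h1]; [|exact h1].
    exfalso. specialize (Hga y s (conj Hs0 h1)). lra. }
  assert (Ha0 : 0 < a) by lra.
  destruct (crossing (fun t => phi y t - mm t) (fun t => dphi y t - - n / (2 * t ^ 2)) a s Has)
    as [xi [Hxi [H1 H2]]].
  - intros t Ht. apply D_minus. apply Hd; lra. apply mm_derive; lra.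
  - specialize (Hga y a (conj Ha0 (Rle_refl a))). lra.
  - lra.
  - set (M := mm a + 2 * L * h).
    assert (HM : forall z, phi z xi <= M).
    { intro z0. assert (Haxi : 0 < a <= xi) by lra. pose proof (upper_growth z0 a xi Haxi).
      pose proof (Hga z0 a (conj Ha0 (Rle_refl a))).
      assert (0 <= mm a) by (unfold mm; assert (0 < n / (2 * a)) by (apply Rdiv_lt_0_compat; lra); lra).
      assert (Rmax (phi z0 a) 0 <= mm a) by (apply Rmax_lub; lra).
      assert (L * (xi - a) <= L * (2 * h)) by (apply Rmult_le_compat_l; lra).
      unfold M; lra. }
    assert (Hxi0 : 0 < xi) by lra.
    assert (Hmx : 0 < mm xi) by (unfold mm; assert (0 < n / (2 * xi)) by (apply Rdiv_lt_0_compat; lra); lra).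
    assert (Hph : 0 < phi y xi) by lra.
    specialize (HD y xi M Hxi0 Hph HM).
    set (ph := phi y xi) in *.
    assert (E1 : A * (M - ph) <= A * (M - mm xi)) by (apply Rmult_le_compat_l; lra).
    assert (E2 : mm xi ^ 2 <= ph ^ 2) by (apply pow_incr; lra).
    assert (E3 : 2 / n * mm xi ^ 2 <= 2 / n * ph ^ 2).
    { apply Rmult_le_compat_l; [|exact E2]. assert (0 < 2 / n) by (apply Rdiv_lt_0_compat; lra); lra. }
    assert (E4 : 2 / n * mm xi ^ 2 = n / (2 * xi ^ 2) + 2 * c / xi + 2 * c ^ 2 / n)
      by (unfold mm; field; lra).
    assert (E5 : 0 < 2 * c / xi) by (apply Rdiv_lt_0_compat; lra).
    assert (E6 : mm a - mm xi <= 4 * n / ts ^ 2 * h).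
    { unfold mm.
      assert (EE : n / (2 * a) + c - (n / (2 * xi) + c) = n * (xi - a) / (2 * a * xi)) by (field; lra).
      rewrite EE.
      assert (xi - a <= 2 * h) by lra.
      assert (ts ^ 2 / 4 <= a * xi).
      { assert (ts / 2 <= xi) by lra. replace (ts ^ 2 / 4) with ((ts/2) * (ts/2)) by field.
        apply Rmult_le_compat; lra. }
      assert (Hax : 0 < a * xi) by (apply Rmult_lt_0_compat; lra).
      assert (Hts2 : 0 < ts ^ 2 / 4) by (assert (0 < ts ^ 2) by (apply pow_lt; lra); lra).
      replace (n * (xi - a) / (2 * a * xi)) with ((n * (xi - a)) * / (2 * (a * xi))) by (field; lra).
      apply Rle_trans with ((n * (2 * h)) * / (2 * (a * xi))).
      { apply Rmult_le_compat_r. left; apply Rinv_0_lt_compat; lra. apply Rmult_le_compat_l; lra. }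
      apply Rle_trans with ((n * (2 * h)) * / (2 * (ts ^ 2 / 4))).
      { apply Rmult_le_compat_l. assert (0 <= n * h) by (apply Rmult_le_pos; lra). lra.
        apply Rinv_le_contravar; lra. }
      right. field. lra. }
    assert (E7 : A * (M - mm xi) <= Q * h).
    { unfold M, Q.
      assert (M - mm xi <= (4 * n / ts ^ 2 + 2 * L) * h) by (unfold M; lra).
      unfold M in H.
      replace (A * (4 * n / ts ^ 2 + 2 * L) * h) with (A * ((4 * n / ts ^ 2 + 2 * L) * h)) by ring.
      apply Rmult_le_compat_l; lra. }
    unfold delta in HQh. lra.
Qed.
End Comparison.


Section SumL.
Variable V : Type.
Lemma sumL_ext (l : list V) g h : (forall y, In y l -> g y = h y) -> sumL l g = sumL l h.
Proof. induction l as [|a l IH]; intro H; simpl; [reflexivity|].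
  rewrite H by (left; reflexivity). rewrite IH; [reflexivity|]. intros; apply H; right; assumption. Qed.
Lemma sumL_comb (l : list V) a b g h :
  a * sumL l g + b * sumL l h = sumL l (fun y => a * g y + b * h y).
Proof. induction l as [|x l IH]; simpl; [ring|]. rewrite <- IH. ring. Qed.
Lemma sumL_scal (l : list V) a g : a * sumL l g = sumL l (fun y => a * g y).
Proof. induction l as [|x l IH]; simpl; [ring|]. rewrite <- IH. ring. Qed.
Lemma sumL_le (l : list V) g h : (forall y, In y l -> g y <= h y) -> sumL l g <= sumL l h.
Proof. induction l as [|x l IH]; intro H; simpl; [lra|].
  apply Rplus_le_compat. apply H; left; reflexivity. apply IH; intros; apply H; right; assumption. Qed.
Lemma sumL_nonneg (l : list V) g : (forall y, In y l -> 0 <= g y) -> 0 <= sumL l g.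
Proof. intro H. replace 0 with (sumL l (fun _ => 0)). apply sumL_le; exact H.
  clear H; induction l; simpl; [reflexivity|rewrite IHl; ring]. Qed.
Lemma sumL_elem (l : list V) g z : (forall y, In y l -> 0 <= g y) -> In z l -> g z <= sumL l g.
Proof. induction l as [|x l IH]; intros H Hz; [destruct Hz|]. simpl.
  destruct Hz as [<-|Hz].
  - assert (0 <= sumL l g) by (apply sumL_nonneg; intros; apply H; right; assumption). lra.
  - assert (0 <= g x) by (apply H; left; reflexivity).
    assert (g z <= sumL l g) by (apply IH; [intros; apply H; right; assumption|exact Hz]). lra. Qed.
Lemma sumL_derive (l : list V) (G : V -> R -> R) dG t :
  (forall y, In y l -> is_derive (G y) t (dG y)) ->
  is_derive (fun s => sumL l (fun y => G y s)) t (sumL l dG).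
Proof. induction l as [|x l IH]; intro H; simpl.
  - apply D_const.
  - apply (D_plus (G x) (fun s => sumL l (fun y => G y s))).
    apply H; left; reflexivity. apply IH; intros; apply H; right; assumption. Qed.
End SumL.


Lemma D_opp (f : R -> R) (x a : R) : is_derive f x a -> is_derive (fun t => - f t) x (- a).
Proof. intro H. apply (D_val _ _ (0 - a)); [|ring].
  apply (is_derive_ext (fun t => 0 - f t)); [intro; change (0 - f t = - f t); ring|].
  apply D_minus; [apply D_const|exact H]. Qed.

Section Graph.
Variable V : Type.
Variable nbrs : V -> list V.
Variable w : V -> V -> R.
Variable mu : V -> R.
Variables psi dpsi : R -> R.
Variable u : V -> R -> R.
Hypothesis Hw : forall x y, In y (nbrs x) -> 0 < w x y.
Hypothesis Hmu : forall x, 0 < mu x.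
Hypothesis Hu : forall x t, 0 <= t -> 0 < u x t.
Hypothesis Hud : forall x t, 0 < t -> is_derive (u x) t (Lap nbrs w mu (fun y => u y t) x).
Hypothesis Hpsid : forall s, 0 < s -> is_derive psi s (dpsi s).
Hypothesis Hpsipos : forall s, 0 < s -> 0 < psi s.
Hypothesis Hdpsipos : forall s, 0 < s -> 0 < dpsi s.

Definition Lp t x := Lap nbrs w mu (fun y => u y t) x.
Definition phi x t := - DeltaPsi nbrs w mu psi (fun y => u y t) x.
Definition Dr x t y := dpsi (u y t / u x t) * ((Lp t y * u x t - u y t * Lp t x) / (u x t) ^ 2).
Definition dphi x t := - (/ mu x * sumL (nbrs x) (fun y => w x y * (Dr x t y - Dr x t x))).
Definition Lw x t := / mu x * sumL (nbrs x) (fun y => w x y * (u y t / u x t * (phi y t - phi x t))).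

Lemma psi_lt a b : 0 < a < b -> psi a < psi b.
Proof. intros [Ha Hab].
  destruct (MVT_cor2 psi dpsi a b Hab) as [c [Heq Hc]].
  { intros c Hc. apply is_derive_Reals. apply Hpsid. lra. }
  assert (0 < dpsi c) by (apply Hdpsipos; lra).
  assert (0 < dpsi c * (b - a)) by (apply Rmult_lt_0_compat; lra). lra. Qed.

Lemma Dr_derive x t y : 0 < t -> is_derive (fun s => psi (u y s / u x s)) t (Dr x t y).
Proof. intro Ht. unfold Dr.
  assert (Hx := Hu x t (Rlt_le _ _ Ht)). assert (Hy := Hu y t (Rlt_le _ _ Ht)).
  apply (D_val _ _ ((Lp t y * u x t - u y t * Lp t x) / u x t ^ 2 * dpsi (u y t / u x t))); [|ring].
  apply (D_comp psi (fun s => u y s / u x s)).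
  - apply Hpsid. apply Rdiv_lt_0_compat; assumption.
  - apply is_derive_div. apply Hud; exact Ht. apply Hud; exact Ht. lra.
Qed.

Lemma phi_derive x t : 0 < t -> is_derive (phi x) t (dphi x t).
Proof. intro Ht. unfold phi, dphi, DeltaPsi, Lap.
  apply D_opp. apply is_derive_scal.
  apply (sumL_derive _ (nbrs x) (fun y s => w x y * (psi (u y s / u x s) - psi (u x s / u x s)))).
  intros y _. apply is_derive_scal. apply D_minus; apply Dr_derive; exact Ht.
Qed.

Lemma Lap_unfold (g : V -> R) x : Lap nbrs w mu g x = / mu x * sumL (nbrs x) (fun y => w x y * (g y - g x)).
Proof. reflexivity. Qed.

Lemma G2_eq x t : 0 < t -> Gamma2Psi nbrs w mu psi dpsi (fun y => u y t) x = / 2 * (- dphi x t + Lw x t).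
Proof. intro Ht. unfold Gamma2Psi.
  assert (Hx := Hu x t (Rlt_le _ _ Ht)).
  assert (HO : OmegaPsi nbrs w mu dpsi (fun y => u y t) x = - dphi x t).
  { unfold OmegaPsi, dphi. rewrite Lap_unfold. rewrite Ropp_involutive. f_equal. apply sumL_ext.
    intros y Hy. assert (Hy' := Hu y t (Rlt_le _ _ Ht)). unfold Dr, Lp. field. lra. }
  assert (HR : Lap nbrs w mu (fun y => u y t) x * DeltaPsi nbrs w mu psi (fun y => u y t) x / u x t
     - Lap nbrs w mu (fun y => u y t * DeltaPsi nbrs w mu psi (fun y0 => u y0 t) y) x / u x t = Lw x t).
  { unfold Lw, phi. rewrite !Lap_unfold.
    set (Dl := DeltaPsi nbrs w mu psi (fun y0 => u y0 t)).
    assert (Hm := Hmu x).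
    replace (/ mu x * sumL (nbrs x) (fun y => w x y * (u y t - u x t)) * Dl x / u x t -
       / mu x * sumL (nbrs x) (fun y => w x y * (u y t * Dl y - u x t * Dl x)) / u x t)
     with ((/ mu x * Dl x / u x t) * sumL (nbrs x) (fun y => w x y * (u y t - u x t)) +
       (- / mu x / u x t) * sumL (nbrs x) (fun y => w x y * (u y t * Dl y - u x t * Dl x)))
     by (field; lra).
    rewrite sumL_comb, sumL_scal. apply sumL_ext. intros y Hy. field. lra. }
  rewrite HO, <- HR. ring.
Qed.

Lemma phi_unfold x t : 0 < t ->
  phi x t = / mu x * sumL (nbrs x) (fun y => w x y * (psi 1 - psi (u y t / u x t))).
Proof. intro Ht. assert (Hx := Hu x t (Rlt_le _ _ Ht)).
  unfold phi, DeltaPsi. rewrite Lap_unfold.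
  replace (- (/ mu x * sumL (nbrs x) (fun y => w x y * (psi (u y t / u x t) - psi (u x t / u x t)))))
    with (/ mu x * (-1 * sumL (nbrs x) (fun y => w x y * (psi (u y t / u x t) - psi (u x t / u x t)))))
    by ring.
  rewrite sumL_scal. f_equal. apply sumL_ext. intros y _.
  replace (u x t / u x t) with 1 by (field; lra). ring.
Qed.

Lemma sum_const x k : sumL (nbrs x) (fun y => w x y * k) = deg nbrs w x * k.
Proof. rewrite (sumL_ext V (nbrs x) (fun y => w x y * k) (fun y => k * w x y)) by (intros y0 Hy0; ring).
  rewrite <- sumL_scal. unfold deg. apply Rmult_comm. Qed.

Variables Dmu Dw s0 n K : R.
Hypothesis HDm : forall x, deg nbrs w x / mu x <= Dmu.
Hypothesis HDw : forall x y, In y (nbrs x) -> deg nbrs w x / w x y <= Dw.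
Hypothesis Hs0 : 0 < s0.
Hypothesis Hs0e : psi s0 = psi 1 * Dw.

Lemma deg_ge x z : In z (nbrs x) -> w x z <= deg nbrs w x.
Proof. intro Hz. unfold deg. apply (sumL_elem _ _ (fun y => w x y)); [|exact Hz].
  intros y Hy; left; apply Hw; exact Hy. Qed.

Lemma deg_nonneg x : 0 <= deg nbrs w x.
Proof. unfold deg. apply sumL_nonneg. intros y Hy; left; apply Hw; exact Hy. Qed.

Lemma Dmu_nonneg (x : V) : 0 <= Dmu.
Proof. apply Rle_trans with (deg nbrs w x / mu x); [|apply HDm].
  apply Rmult_le_pos. apply deg_nonneg. left; apply Rinv_0_lt_compat, Hmu. Qed.

Lemma avg_bound x k : 0 <= k -> / mu x * (deg nbrs w x * k) <= Dmu * k.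
Proof. intro Hk. replace (/ mu x * (deg nbrs w x * k)) with (deg nbrs w x / mu x * k) by (unfold Rdiv; ring).
  apply Rmult_le_compat_r; [exact Hk|apply HDm]. Qed.

Lemma phi_le_P x t : 0 < t -> phi x t <= Dmu * psi 1.
Proof. intro Ht. rewrite phi_unfold by exact Ht.
  assert (H1 := Hpsipos 1 Rlt_0_1).
  apply Rle_trans with (/ mu x * sumL (nbrs x) (fun y => w x y * psi 1)).
  - apply Rmult_le_compat_l. left; apply Rinv_0_lt_compat, Hmu.
    apply sumL_le. intros y Hy. apply Rmult_le_compat_l. left; apply Hw; exact Hy.
    assert (0 < psi (u y t / u x t)).
    { apply Hpsipos. apply Rdiv_lt_0_compat; apply Hu; lra. } lra.
  - rewrite sum_const. apply avg_bound. lra.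
Qed.

Lemma has_nbr x t : 0 < t -> 0 < phi x t -> exists z, In z (nbrs x).
Proof. intros Ht Hp. rewrite phi_unfold in Hp by exact Ht.
  destruct (nbrs x) as [|z l]; [simpl in Hp; lra|]. exists z; left; reflexivity. Qed.

Lemma s0_ge1 x z : In z (nbrs x) -> 1 <= s0.
Proof. intro Hz. assert (Hwz := Hw x z Hz). assert (Hd := deg_ge x z Hz).
  assert (1 <= Dw).
  { apply Rle_trans with (deg nbrs w x / w x z); [|apply HDw; exact Hz].
    apply (Rmult_le_reg_r (w x z)); [exact Hwz|]. unfold Rdiv.
    rewrite Rmult_assoc, Rinv_l, Rmult_1_r by lra. lra. }
  destruct (Rle_or_lt 1 s0) as [h|h]; [exact h|exfalso].
  assert (psi s0 < psi 1) by (apply psi_lt; lra).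
  assert (H1 := Hpsipos 1 Rlt_0_1).
  assert (psi 1 * 1 <= psi 1 * Dw) by (apply Rmult_le_compat_l; lra). lra.
Qed.

Lemma ratio_bound x t z : 0 < t -> 0 < phi x t -> In z (nbrs x) -> u z t / u x t < s0.
Proof. intros Ht Hp Hz. rewrite phi_unfold in Hp by exact Ht.
  assert (Hm := Hmu x). assert (H1 := Hpsipos 1 Rlt_0_1).
  set (S := sumL (nbrs x) (fun y => w x y * (psi 1 - psi (u y t / u x t)))) in Hp.
  assert (HS : 0 < S).
  { destruct (Rle_or_lt S 0) as [h|h]; [|exact h].
    assert (/ mu x * S <= 0) by (apply Rmult_le_0_l; [left; apply Rinv_0_lt_compat; lra|exact h]). lra. }
  assert (HS2 : S = deg nbrs w x * psi 1 + -1 * sumL (nbrs x) (fun y => w x y * psi (u y t / u x t))).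
  { rewrite <- sum_const. rewrite <- (Rmult_1_l (sumL _ (fun y => w x y * psi 1))). rewrite sumL_comb.
    unfold S. apply sumL_ext. intros; ring. }
  assert (Hel : w x z * psi (u z t / u x t) <= sumL (nbrs x) (fun y => w x y * psi (u y t / u x t))).
  { apply (sumL_elem _ _ (fun y => w x y * psi (u y t / u x t))); [|exact Hz].
    intros y Hy. apply Rmult_le_pos. left; apply Hw; exact Hy. left; apply Hpsipos.
    apply Rdiv_lt_0_compat; apply Hu; lra. }
  assert (Hwz := Hw x z Hz).
  assert (Hlt : psi (u z t / u x t) < psi s0).
  { rewrite Hs0e. assert (HH := HDw x z Hz).
    assert (psi (u z t / u x t) < deg nbrs w x / w x z * psi 1).
    { apply (Rmult_lt_reg_l (w x z)); [exact Hwz|].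
      replace (w x z * (deg nbrs w x / w x z * psi 1)) with (deg nbrs w x * psi 1) by (field; lra). lra. }
    assert (deg nbrs w x / w x z * psi 1 <= Dw * psi 1) by (apply Rmult_le_compat_r; lra). lra. }
  destruct (Rle_or_lt s0 (u z t / u x t)) as [h|h]; [exfalso|exact h].
  destruct h as [h|h].
  - assert (psi s0 < psi (u z t / u x t)) by (apply psi_lt; lra). lra.
  - rewrite h in Hlt. lra.
Qed.

Lemma Gamma_bound x t : 0 < t -> 0 < phi x t ->
  GammaPsi nbrs w mu psi dpsi (fun y => u y t) x <= Dmu * (dpsi 1 * (s0 - 1) + psi 1).
Proof. intros Ht Hp. destruct (has_nbr x t Ht Hp) as [z Hz]. assert (Hs1 := s0_ge1 x z Hz).
  assert (Hx := Hu x t (Rlt_le _ _ Ht)).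
  assert (H1 := Hpsipos 1 Rlt_0_1). assert (H1' := Hdpsipos 1 Rlt_0_1).
  assert (HMc : 0 <= dpsi 1 * (s0 - 1) + psi 1) by (assert (0 <= dpsi 1 * (s0 - 1)) by (apply Rmult_le_pos; lra); lra).
  unfold GammaPsi, DeltaPsi. rewrite Lap_unfold.
  apply Rle_trans with (/ mu x * sumL (nbrs x) (fun y => w x y * (dpsi 1 * (s0 - 1) + psi 1))).
  - apply Rmult_le_compat_l. left; apply Rinv_0_lt_compat, Hmu.
    apply sumL_le. intros y Hy. apply Rmult_le_compat_l. left; apply Hw; exact Hy.
    replace (u x t / u x t) with 1 by (field; lra).
    assert (Hr := ratio_bound x t y Ht Hp Hy).
    assert (0 < psi (u y t / u x t)) by (apply Hpsipos; apply Rdiv_lt_0_compat; apply Hu; lra).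
    assert (dpsi 1 * (u y t / u x t - 1) <= dpsi 1 * (s0 - 1)) by (apply Rmult_le_compat_l; lra).
    unfold psibar. lra.
  - rewrite sum_const. apply avg_bound. exact HMc.
Qed.

Lemma Lw_bound x t M : 0 < t -> 0 < phi x t -> (forall y, phi y t <= M) ->
  Lw x t <= Dmu * s0 * (M - phi x t).
Proof. intros Ht Hp HM.
  assert (Hx := Hu x t (Rlt_le _ _ Ht)). assert (HMx := HM x).
  unfold Lw.
  apply Rle_trans with (/ mu x * sumL (nbrs x) (fun y => w x y * (s0 * (M - phi x t)))).
  - apply Rmult_le_compat_l. left; apply Rinv_0_lt_compat, Hmu.
    apply sumL_le. intros y Hy. apply Rmult_le_compat_l. left; apply Hw; exact Hy.
    assert (Hr := ratio_bound x t y Ht Hp Hy).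
    assert (Hr0 : 0 < u y t / u x t) by (apply Rdiv_lt_0_compat; apply Hu; lra).
    assert (HMy := HM y).
    apply Rle_trans with (u y t / u x t * (M - phi x t)).
    + apply Rmult_le_compat_l; lra.
    + apply Rmult_le_compat_r; lra.
  - rewrite sum_const. replace (Dmu * s0 * (M - phi x t)) with (Dmu * (s0 * (M - phi x t))) by ring.
    apply avg_bound. apply Rmult_le_pos; lra.
Qed.

Hypothesis Hn : 0 < n.
Hypothesis HK : 0 < K.
Hypothesis HCD : CDpsi nbrs w mu psi dpsi n (- K).

Lemma dphi_bound x t M : 0 < t -> 0 < phi x t -> (forall y, phi y t <= M) ->
  dphi x t <= Dmu * s0 * (M - phi x t) - 2 / n * (phi x t) ^ 2
              + 2 * K * (Dmu * (dpsi 1 * (s0 - 1) + psi 1)).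
Proof. intros Ht Hp HM.
  assert (HG := HCD (fun y => u y t) (fun y => Hu y t (Rlt_le _ _ Ht)) x).
  rewrite G2_eq in HG by exact Ht.
  assert (HDp : DeltaPsi nbrs w mu psi (fun y => u y t) x = - phi x t) by (unfold phi; ring).
  rewrite HDp in HG.
  assert (HGa := Gamma_bound x t Ht Hp).
  assert (HL := Lw_bound x t M Ht Hp HM).
  set (G := GammaPsi nbrs w mu psi dpsi (fun y => u y t) x) in *.
  assert (K * G <= K * (Dmu * (dpsi 1 * (s0 - 1) + psi 1))) by (apply Rmult_le_compat_l; lra).
  assert (E : / n * (- phi x t) ^ 2 = / 2 * (2 / n * phi x t ^ 2)) by (field; lra).
  rewrite E in HG. lra.
Qed.
End Graph.


Theorem mainTheorem8
  (V : Type) (nbrs : V -> list V) (w : V -> V -> R) (mu : V -> R)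
  (psi dpsi : R -> R) (n K Dmu Dw s0 : R) (u : V -> R -> R) :
  weighted_graph nbrs w mu ->
  infinite_graph V ->
  is_Dmu nbrs w mu Dmu ->
  is_Dw nbrs w Dw ->
  good_psi psi dpsi ->
  0 < n -> 0 < K ->
  CDpsi nbrs w mu psi dpsi n (- K) ->
  (* s0 = psi^{-1}(psi(1) D_w), psi(1) D_w being in the image of psi *)
  0 < s0 -> psi s0 = psi 1 * Dw ->
  heat_solution nbrs w mu u ->
  forall (x : V) (t : R), 0 < t ->
    GammaPsi nbrs w mu psi dpsi (fun y => u y t) x - dpsi 1 * (Derive (u x) t / u x t)
    <= n / (2 * t) + sqrt (n * K * (Dmu * (dpsi 1 * (s0 - 1) + psi 1))).
Proof.
  intros [_ [_ [_ [Hw [Hmu _]]]]] _ [HDmu _] [HDw _] [Hpsid [_ [_ [Hpsipos Hdpsipos]]]]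
         Hn HK HCD Hs0 Hs0e [Hu [Hud _]] x t Ht.
  assert (HDm : forall x, deg nbrs w x / mu x <= Dmu) by (intro z; apply HDmu; exists z; reflexivity).
  assert (HDw' : forall x y, In y (nbrs x) -> deg nbrs w x / w x y <= Dw)
    by (intros z y Hy; apply HDw; exists z, y; split; [exact Hy|reflexivity]).
  assert (Hw' : forall x y, In y (nbrs x) -> 0 < w x y) by (intros; apply Hw; assumption).
  set (C := Dmu * (dpsi 1 * (s0 - 1) + psi 1)).
  assert (Hx := Hu x t (Rlt_le _ _ Ht)).
  assert (HL : GammaPsi nbrs w mu psi dpsi (fun y => u y t) x - dpsi 1 * (Derive (u x) t / u x t)
               = phi V nbrs w mu psi u x t).
  { rewrite (is_derive_unique _ _ _ (Hud x t Ht)).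
    unfold GammaPsi, phi, DeltaPsi. rewrite !Lap_unfold.
    assert (Hm := Hmu x).
    replace (/ mu x * sumL (nbrs x) (fun y => w x y * (psibar psi dpsi (u y t / u x t) - psibar psi dpsi (u x t / u x t))) -
       dpsi 1 * (/ mu x * sumL (nbrs x) (fun y => w x y * (u y t - u x t)) / u x t))
    with (/ mu x * sumL (nbrs x) (fun y => w x y * (psibar psi dpsi (u y t / u x t) - psibar psi dpsi (u x t / u x t))) +
       (- dpsi 1 / mu x / u x t) * sumL (nbrs x) (fun y => w x y * (u y t - u x t))) by (field; lra).
    replace (- (/ mu x * sumL (nbrs x) (fun y => w x y * (psi (u y t / u x t) - psi (u x t / u x t)))))
      with ((- / mu x) * sumL (nbrs x) (fun y => w x y * (psi (u y t / u x t) - psi (u x t / u x t)))) by ring.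
    rewrite sumL_comb, sumL_scal. apply sumL_ext. intros y Hy.
    replace (u x t / u x t) with 1 by (field; lra). unfold psibar. field. lra. }
  rewrite HL.
  assert (Hall : forall c, sqrt (n * K * C) < c -> phi V nbrs w mu psi u x t <= n / (2 * t) + c).
  { intros c Hc.
    assert (Hsq := sqrt_pos (n * K * C)).
    assert (Hc2 : n * K * C < c ^ 2).
    { destruct (Rle_or_lt 0 (n * K * C)) as [h|h].
      - rewrite <- (sqrt_sqrt (n * K * C) h).
        replace (c ^ 2) with (c * c) by ring. apply Rmult_le_0_lt_compat; lra.
      - assert (0 < c ^ 2) by (apply pow_lt; lra). lra. }
    set (P := Dmu * psi 1).
    set (A := Dmu * s0).
    assert (HA : 0 <= A) by (unfold A; apply Rmult_le_pos; [apply (Dmu_nonneg V nbrs w mu Hw' Hmu Dmu HDm x)|lra]).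
    assert (HP0 : 0 <= P) by (unfold P; apply Rmult_le_pos; [apply (Dmu_nonneg V nbrs w mu Hw' Hmu Dmu HDm x)|left; apply Hpsipos; lra]).
    set (L := Rmax 0 (A * P + 2 * K * C)).
    apply (comparison V (phi V nbrs w mu psi u) (dphi V nbrs w mu dpsi u) n c (2 * K * C) A L P).
    - exact Hn.
    - lra.
    - apply (Rmult_lt_reg_r n); [exact Hn|].
      replace (2 * c ^ 2 / n * n) with (2 * c ^ 2) by (field; lra). nra.
    - exact HA.
    - apply Rmax_l.
    - intros z s Hs. apply (phi_derive V nbrs w mu psi dpsi u Hu Hud Hpsid z s Hs).
    - intros z s Hs. apply (phi_le_P V nbrs w mu psi u Hw' Hmu Hu Hpsipos Dmu HDm z s Hs).
    - intros z s Hs Hp.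
      assert (HB := dphi_bound V nbrs w mu psi dpsi u Hw' Hmu Hu Hpsid Hpsipos Hdpsipos Dmu Dw s0 n K
               HDm HDw' Hs0 Hs0e Hn HK HCD z s P Hs Hp
               (fun y => phi_le_P V nbrs w mu psi u Hw' Hmu Hu Hpsipos Dmu HDm y s Hs)).
      fold A C in HB.
      assert (A * (P - phi V nbrs w mu psi u z s) <= A * P) by (apply Rmult_le_compat_l; lra).
      assert (0 <= 2 / n * phi V nbrs w mu psi u z s ^ 2).
      { apply Rmult_le_pos. left; apply Rdiv_lt_0_compat; lra. apply pow2_ge_0. }
      assert (A * P + 2 * K * C <= L) by apply Rmax_r. lra.
    - intros z s M Hs Hp HM.
      assert (HB := dphi_bound V nbrs w mu psi dpsi u Hw' Hmu Hu Hpsid Hpsipos Hdpsipos Dmu Dw s0 n K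
               HDm HDw' Hs0 Hs0e Hn HK HCD z s M Hs Hp HM).
      fold A C in HB. lra.
    - exact Ht. }
  destruct (Rle_or_lt (phi V nbrs w mu psi u x t) (n / (2 * t) + sqrt (n * K * C))) as [h|h]; [exact h|].
  exfalso.
  set (e := phi V nbrs w mu psi u x t - (n / (2 * t) + sqrt (n * K * C))) in *.
  assert (He : 0 < e) by (unfold e; lra).
  specialize (Hall (sqrt (n * K * C) + e / 2) ltac:(lra)).
  unfold e in Hall. lra.
Qed.
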